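(* Let $<$ be an ordering of $\mathbb{F}_m$ preserved by the Artin automorphism of $\alpha\in B_m$, and $<'$ an ordering of $\mathbb{F}_n$ preserved by the Artin automorphism of $\beta\in B_n$. Let $\prec$ be the ordering of $\mathbb{F}_m*\mathbb{F}_n\cong\mathbb{F}_{m+n}$ constructed from $(\mathbb{F}_m,<)$ and $(\mathbb{F}_n,<')$ as in the context. Then the Artin automorphism of $\alpha\otimes\beta\in B_{m+n}$ preserves $\prec$.
   Context: $B_n$ is the braid group with generators $\sigma_1,\dots,\sigma_{n-1}$; the Artin representation $B_n\to\mathrm{Aut}(\mathbb{F}_n)$ ($\mathbb{F}_n$ free on $x_1,\dots,x_n$) sends $\sigma_i$ to $x_i\mapsto x_ix_{i+1}x_i^{-1}$, $x_{i+1}\mapsto x_i$, $x_j\mapsto x_j$ otherwise. Orderings are strict total orders invariant under left and right multiplication. $\alpha\otimes\beta\in B_{m+n}$ is the side-by-side braid, image of $(\alpha,\beta)$ under $B_m\times B_n\to B_{m+n}$, $\sigma_i\mapsto\sigma_i$ (first factor), $\sigma_j\mapsto\sigma_{m+j}$ (second factor). Identify $\mathbb{F}_m*\mathbb{F}_n$ with $\mathbb{F}_{m+n}$ by sending the generators of $\mathbb{F}_m$ to $x_1,\dots,x_m$ and those of $\mathbb{F}_n$ to $x_{m+1},\dots,x_{m+n}$. Construction of $\prec$ on $F*G$ from orderings $<_F,<_G$: order $F\times G$ lexicographically ($(f,g)<(f',g')$ iff $f<_Ff'$, or $f=f'$ and $g<_Gg'$); in $R=\mathbb{Z}(F\times G)$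 a nonzero element is positive if the coefficient of its largest group element is a positive integer; $\rho\colon F*G\to M_2(R[t])$ is the injective homomorphism with $\rho(f)=\begin{pmatrix} f&(f-1)t\\0&1\end{pmatrix}$, $\rho(g)=\begin{pmatrix}1&0\\(g-1)t&g\end{pmatrix}$; order matrix positions $(1,1)$, $(2,2)$, then the off-diagonal ones in a fixed order; a nonzero $M=\sum_iM_it^i$ is positive if for the least $n$ with $M_n\ne0$ the first nonzero entry of $M_n$ is positive in $R$; $x\prec y$ iff $\rho(y)-\rho(x)$ is positive. *)

(* Defs.v *)
From HB Require Import structures.
From mathcomp Require Import all_boot all_order all_algebra.
Set Implicit Arguments. Unset Strict Implicit. Unset Printing Implicit Defensive.
Import Order.TTheory GRing.Theory Num.Theory.

(* Free group F_n on x_0, ..., x_{n-1} (0-indexed; x_k is the paper's  *)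
(* x_{k+1}), as the type of reduced words.  A letter (k, b) stands for *)
(* x_k if b = false and x_k^{-1} if b = true.                          *)
Definition letter := (nat * bool)%type.

Definition cancels (a b : letter) : bool := (a.1 == b.1) && (a.2 != b.2).

Fixpoint nocancel (w : seq letter) : bool :=
  match w with
  | a :: ((b :: _) as t) => ~~ cancels a b && nocancel t
  | _ => true
  end.

Definition reduced (n : nat) (w : seq letter) : bool :=
  all (fun a => a.1 < n) w && nocancel w.

Record FG (n : nat) := mkFG { fgw : seq letter; fgP : reduced n fgw }.

HB.instance Definition _ n := [isSub for @fgw n].
HB.instance Definition _ n := [Equality of FG n by <:].

Definition push (a : letter) (w : seq letter) : seq letter :=
  match w with
  | b :: t => if cancels a b then t else a :: w
  | [::] => [:: a]
  end.

Definition normW (n : nat) (w : seq letter) : seq letter :=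
  foldr push [::] (filter (fun a => a.1 < n) w).

Lemma push_reduced n a v : a.1 < n -> reduced n v -> reduced n (push a v).
Proof.
rewrite /reduced => an; case: v => [|b t] /=; first by rewrite an.
case/andP=> /andP [bn tn] nc.
case: ifP => [_|nab] /=.
  by case: t tn nc => [|c t] //= /andP [-> ->] /andP [_ ->].
by rewrite an bn tn /= nab nc.
Qed.

Lemma normW_reduced n w : reduced n (normW n w).
Proof.
rewrite /normW; elim: w => [|a w IH] //=.
by case: ifP => // an; apply: push_reduced.
Qed.

(* the element of F_n represented by an arbitrary word (letters with index
   >= n are discarded; they never occur in our uses) *)
Definition normFG (n : nat) (w : seq letter) : FG n := mkFG (normW_reduced n w).

Definition fg_one (n : nat) : FG n := normFG n [::].
Definition fg_mul (n : nat) (x y : FG n) : FG n := normFG n (fgw x ++ fgw y).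

Definition invW (w : seq letter) : seq letter := rev (map (fun a => (a.1, ~~ a.2)) w).

(* Artin representation.  A braid in B_n is given by a word in the     *)
(* generators sigma_i^{+-1}: a letter (i, false) is sigma_i, (i, true) *)
(* is sigma_i^{-1} (0-indexed: sigma_i acts on x_i, x_{i+1}).          *)
Definition braid_word (n : nat) (b : seq (nat * bool)) : Prop :=
  all (fun s => s.1.+1 < n) b.

Definition sigma_img (s : nat * bool) (j : nat) : seq letter :=
  let i := s.1 in
  if ~~ s.2 then
    if j == i then [:: (i, false); (i.+1, false); (i, true)]
    else if j == i.+1 then [:: (i, false)]
    else [:: (j, false)]
  else
    if j == i then [:: (i.+1, false)]
    else if j == i.+1 then [:: (i.+1, true); (i, false); (i.+1, false)]
    else [:: (j, false)].

Definition substW (img : nat -> seq letter) (w : seq letter) : seq letter :=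
  flatten (map (fun a => if a.2 then invW (img a.1) else img a.1) w).

Definition artin_gen (n : nat) (s : nat * bool) (x : FG n) : FG n :=
  normFG n (substW (sigma_img s) (fgw x)).

Arguments artin_gen n s x : clear implicits.

(* the Artin automorphism of the braid s_1 s_2 ... s_k is
   artin_gen s_1 \o artin_gen s_2 \o ... \o artin_gen s_k
   (B_n -> Aut(F_n) is a homomorphism) *)
Definition artin (n : nat) (b : seq (nat * bool)) : FG n -> FG n :=
  foldr (fun s (f : FG n -> FG n) x => artin_gen n s (f x)) id b.

Arguments artin n b _ : clear implicits.

Definition braid_tensor (m : nat) (a b : seq (nat * bool)) : seq (nat * bool) :=
  a ++ map (fun s => (m + s.1, s.2)) b.

Definition bi_ordering (T : Type) (mul : T -> T -> T) (lt : T -> T -> Prop) : Prop :=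
  [/\ (forall x, ~ lt x x),
      (forall x y z, lt x y -> lt y z -> lt x z),
      (forall x y, x <> y -> lt x y \/ lt y x) &
      (forall x y z, lt x y -> lt (mul z x) (mul z y) /\ lt (mul x z) (mul y z))].

Definition preserves (T : Type) (phi : T -> T) (lt : T -> T -> Prop) : Prop :=
  forall x y, lt x y <-> lt (phi x) (phi y).

Section Construction.
Variables (m n : nat) (ltF : FG m -> FG m -> Prop) (ltG : FG n -> FG n -> Prop).

Definition P := (FG m * FG n)%type.

Definition P_mul (p q : P) : P := (fg_mul p.1 q.1, fg_mul p.2 q.2).
Definition P_one : P := (fg_one m, fg_one n).

Definition lexlt (p q : P) : Prop :=
  ltF p.1 q.1 \/ (p.1 = q.1 /\ ltG p.2 q.2).

(* An element of R = Z(F x G) is a function P -> int (of finite support);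
   positive: coefficient of its largest group element is positive. *)
Definition R_zero (r : P -> int) : Prop := forall g, r g = 0.
Definition R_pos (r : P -> int) : Prop :=
  exists g, (0 < r g)%R /\ forall h, lexlt g h -> r h = 0.

(* Elements of M_2(R[t]) are represented as formal finite sums of
   monomials c * g * t^k * E_{ij}, encoded as (c, g, k, i, j) with
   c : int, g : P, k : nat, i j : bool (false = index 1, true = index 2). *)
Definition mono := (int * P * nat * bool * bool)%type.
Definition MT := seq mono.

Definition mcoef (M : MT) (k : nat) (i j : bool) (g : P) : int :=
  \sum_(x <- M | [&& x.1.1.2 == k, x.1.2 == i & x.2 == j] && (x.1.1.1.2 == g)) x.1.1.1.1.

Definition M_mul (A B : MT) : MT :=
  flatten [seq [seq (x.1.1.1.1 * y.1.1.1.1, P_mul x.1.1.1.2 y.1.1.1.2,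
                     x.1.1.2 + y.1.1.2, x.1.2, y.2)%R
               | y <- B & y.1.2 == x.2] | x <- A].

Definition M_sub (A B : MT) : MT :=
  A ++ [seq (- x.1.1.1.1, x.1.1.1.2, x.1.1.2, x.1.2, x.2)%R | x <- B].

Definition M_id : MT := [:: (1%R, P_one, 0, false, false); (1%R, P_one, 0, true, true)].

(* rho on a letter of F_{m+n} = F_m * F_n :
   rho(f) = [[f, (f-1)t],[0,1]],  rho(g) = [[1,0],[(g-1)t, g]] *)
Definition rho_letter (a : letter) : MT :=
  if a.1 < m then
    let f := (normFG m [:: a], fg_one n) in
    [:: (1%R, f, 0, false, false); (1%R, f, 1, false, true);
        ((-1)%R, P_one, 1, false, true); (1%R, P_one, 0, true, true)]
  else
    let g := (fg_one m, normFG n [:: (a.1 - m, a.2)]) in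
    [:: (1%R, P_one, 0, false, false); (1%R, g, 1, true, false);
        ((-1)%R, P_one, 1, true, false); (1%R, g, 0, true, true)].

Definition rho (x : FG (m + n)) : MT :=
  foldr (fun a M => M_mul (rho_letter a) M) M_id (fgw x).

(* positivity in M_2(R[t]): for the least k with M_k <> 0, the first
   nonzero entry of M_k, in the order (1,1), (2,2), then the two
   off-diagonal positions in the fixed order given by [ofs]
   (ofs = false: (1,2) then (2,1); ofs = true: (2,1) then (1,2)),
   is positive in R. *)
Definition M_zero_at (M : MT) (k : nat) : Prop :=
  forall i j, R_zero (mcoef M k i j).

Definition M_pos (ofs : bool) (M : MT) : Prop :=
  exists k, (forall k', k' < k -> M_zero_at M k') /\
    let E i j := mcoef M k i j in
    let o1 := (ofs, ~~ ofs) in let o2 := (~~ ofs, ofs) in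
    [\/ R_pos (E false false),
        R_zero (E false false) /\ R_pos (E true true),
        [/\ R_zero (E false false), R_zero (E true true) & R_pos (E o1.1 o1.2)] |
        [/\ R_zero (E false false), R_zero (E true true), R_zero (E o1.1 o1.2)
          & R_pos (E o2.1 o2.2)]].

Definition prec (ofs : bool) (x y : FG (m + n)) : Prop :=
  M_pos ofs (M_sub (rho y) (rho x)).

End Construction.

(* Main.v *)
Require Import Defs.
From mathcomp Require Import all_boot all_order all_algebra.
From mathcomp Require Import ring.
From Stdlib Require Import Classical_Prop.
Set Implicit Arguments. Unset Strict Implicit. Unset Printing Implicit Defensive.
Import Order.TTheory GRing.Theory Num.Theory.

Definition act (u z : seq letter) := foldr push z u.
Definition linv (a : letter) : letter := (a.1, ~~ a.2).

Lemma cancels_inv a : cancels a (linv a).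
Proof. by rewrite /cancels /= eqxx; case: a.2. Qed.

Lemma cancels_eq a b : cancels a b -> b = linv a.
Proof.
case: a b => [i x] [j y]; rewrite /cancels /linv /= => /andP [/eqP <-].
by case: x; case: y.
Qed.

Lemma pushK a b z : cancels a b -> nocancel z -> push a (push b z) = z.
Proof.
move=> ab; case: z => [|c t] /=; first by rewrite ab.
move=> nc.
case: ifP => bc /=; last by rewrite ab.
have ca : c = a.
  rewrite (cancels_eq bc) (cancels_eq ab).
  by case: a {ab bc} => i x; rewrite /linv /= negbK.
subst c. case: t nc => [|d t] //= /andP [nad _].
by rewrite (negbTE nad).
Qed.

Section Act.
Variable n : nat.

Lemma reduced_nc w : reduced n w -> nocancel w.
Proof. by case/andP. Qed.

Lemma reduced_all w : reduced n w -> all (fun a => a.1 < n) w.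
Proof. by case/andP. Qed.

Lemma act_reduced u z : all (fun a => a.1 < n) u -> reduced n z -> reduced n (act u z).
Proof.
elim: u => [|a u IH] //= /andP [an au] rz.
by apply: push_reduced => //; apply: IH.
Qed.

Lemma act_cat u v z : act (u ++ v) z = act u (act v z).
Proof. by rewrite /act foldr_cat. Qed.

Lemma act_push a w z : all (fun a => a.1 < n) w -> reduced n z ->
  act (push a w) z = push a (act w z).
Proof.
case: w => [|b t] //= /andP [bn tn] rz.
case: ifP => // ab.
by rewrite pushK //; apply: reduced_nc; apply: act_reduced.
Qed.

Lemma act_norm u z : all (fun a => a.1 < n) u -> reduced n z ->
  act (foldr push [::] u) z = act u z.
Proof.
elim: u => [|a u IH] //= /andP [an un] rz.
rewrite act_push //; first by rewrite IH.
apply: reduced_all. apply: (act_reduced (z:=[::])) => //.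
Qed.

Lemma reduced_tl a t : reduced n (a :: t) -> reduced n t.
Proof.
rewrite /reduced /= => /andP [/andP [_ ->]].
by case: t => [|b t] //= /andP [_ ->].
Qed.

Lemma act_nil_red g : reduced n g -> act g [::] = g.
Proof.
elim: g => [|a t IH] //= rg.
rewrite IH; last exact: reduced_tl rg.
move: rg; rewrite /reduced /=.
case: t {IH} => [|b t] //= /andP [_ /andP [nab _]].
by rewrite (negbTE nab).
Qed.

Lemma normW_act u : all (fun a => a.1 < n) u -> normW n u = act u [::].
Proof. by move=> un; rewrite /normW (all_filterP un). Qed.

Lemma fgw_mul (f g : FG n) : fgw (fg_mul f g) = act (fgw f) (fgw g).
Proof.
rewrite /fg_mul /= normW_act; last first.
  by rewrite all_cat !reduced_all ?fgP.
by rewrite act_cat (act_nil_red (fgP g)).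
Qed.

Lemma fg_mulA (f g h : FG n) : fg_mul (fg_mul f g) h = fg_mul f (fg_mul g h).
Proof.
apply: val_inj; change (fgw (fg_mul (fg_mul f g) h) = fgw (fg_mul f (fg_mul g h))).
rewrite !fgw_mul.
rewrite -(act_nil_red (fgP g)) -act_cat act_norm ?act_cat ?fgP //.
  by rewrite (act_nil_red (fgP g)).
by rewrite all_cat !reduced_all ?fgP.
Qed.

Lemma fg_mul1 (f : FG n) : fg_mul f (fg_one n) = f.
Proof.
apply: val_inj; change (fgw (fg_mul f (fg_one n)) = fgw f).
by rewrite fgw_mul /= act_nil_red ?fgP.
Qed.

Lemma fg_1mul (f : FG n) : fg_mul (fg_one n) f = f.
Proof.
apply: val_inj; change (fgw (fg_mul (fg_one n) f) = fgw f).
by rewrite fgw_mul.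
Qed.

Lemma invW_cons a u : invW (a :: u) = invW u ++ [:: linv a].
Proof. by rewrite /invW /= rev_cons cats1. Qed.

Lemma invWK u : invW (invW u) = u.
Proof.
rewrite /invW map_rev revK -map_comp map_id_in //.
by case=> i x _ /=; rewrite negbK.
Qed.

Lemma all_invW u : all (fun a => a.1 < n) u -> all (fun a => a.1 < n) (invW u).
Proof. by rewrite /invW all_rev all_map. Qed.

Lemma act_invW u z : all (fun a => a.1 < n) u -> reduced n z ->
  act u (act (invW u) z) = z.
Proof.
elim: u z => [|a u IH] z //= /andP [an un] rz.
rewrite invW_cons act_cat /= IH //; last by apply: push_reduced.
by rewrite pushK ?cancels_inv ?reduced_nc.
Qed.

End Act.

Section Subst.
Variable n : nat.
Variable img : nat -> seq letter.
Hypothesis Himg : forall j, j < n -> all (fun a => a.1 < n) (img j).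

Definition img' (a : letter) := if a.2 then invW (img a.1) else img a.1.

Lemma substW_cons a w : substW img (a :: w) = img' a ++ substW img w.
Proof. by []. Qed.

Lemma substW_cat u w : substW img (u ++ w) = substW img u ++ substW img w.
Proof. by rewrite /substW map_cat flatten_cat. Qed.

Lemma all_img' a : a.1 < n -> all (fun a => a.1 < n) (img' a).
Proof. by move=> an; rewrite /img'; case: a.2; rewrite ?all_invW ?Himg. Qed.

Lemma all_substW w : all (fun a => a.1 < n) w -> all (fun a => a.1 < n) (substW img w).
Proof.
elim: w => [|a w IH] //= /andP [an wn].
by rewrite substW_cons all_cat all_img' // IH.
Qed.

Lemma img'_linv a : img' (linv a) = invW (img' a).
Proof. by rewrite /img' /linv /=; case: a.2 => //=; rewrite invWK. Qed.

Lemma act_substW_push a w z : a.1 < n -> reduced n w -> reduced n z ->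
  act (substW img (push a w)) z = act (substW img (a :: w)) z.
Proof.
move=> an rw rz; case: w rw => [|b t] //= rw.
case: ifP => // ab.
rewrite !substW_cons !act_cat (cancels_eq ab) img'_linv (act_invW (n:=n)) //.
  by apply: all_img'.
apply: act_reduced => //; apply: all_substW.
exact: reduced_all (reduced_tl rw).
Qed.

Lemma act_substW_act u w z : all (fun a => a.1 < n) u -> reduced n w -> reduced n z ->
  act (substW img (act u w)) z = act (substW img (u ++ w)) z.
Proof.
elim: u => [|a u IH] //= /andP [an un] rw rz.
rewrite act_substW_push //; last exact: act_reduced.
by rewrite !substW_cons !act_cat IH.
Qed.

Definition genF (f : FG n) : FG n := normFG n (substW img (fgw f)).

Lemma fgw_genF f : fgw (genF f) = act (substW img (fgw f)) [::].
Proof. by rewrite /= normW_act // all_substW // reduced_all ?fgP. Qed.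

Lemma genF_mul f g : genF (fg_mul f g) = fg_mul (genF f) (genF g).
Proof.
apply: val_inj; change (fgw (genF (fg_mul f g)) = fgw (fg_mul (genF f) (genF g))).
rewrite fgw_mul !fgw_genF fgw_mul act_substW_act ?reduced_all ?fgP //.
rewrite substW_cat act_cat (act_norm (n:=n)) //; last first.
  by apply: act_reduced => //; apply: all_substW; rewrite reduced_all ?fgP.
by apply: all_substW; rewrite reduced_all ?fgP.
Qed.

End Subst.

Lemma sigma_img_all n s j : s.1.+1 < n -> j < n -> all (fun a => a.1 < n) (sigma_img s j).
Proof.
move=> sn jn; have s1 : s.1 < n by apply: ltnW.
rewrite /sigma_img; case: s.2 => /=; repeat case: ifP => _ /=; by rewrite ?s1 ?sn ?jn.
Qed.

Lemma artin_gen_genF n s : artin_gen n s = genF (n:=n) (sigma_img s).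
Proof. by []. Qed.

Local Open Scope ring_scope.
Arguments fg_mul : simpl never.
Arguments normFG : simpl never.

Section Mat.
Variables m n : nat.
Local Notation P := (P m n).
Local Notation mono := (mono m n).
Local Notation MT := (MT m n).

Definition key := (nat * bool * bool * P)%type.
Definition keyof (x : mono) : key := (x.1.1.2, x.1.2, x.2, x.1.1.1.2).
Definition mc (M : MT) (K : key) : int :=
  \sum_(x <- M) (if keyof x == K then x.1.1.1.1 else 0).
Definition meq (A B : MT) := forall K, mc A K = mc B K.

Lemma meq_refl A : meq A A. Proof. by []. Qed.
Lemma meq_sym A B : meq A B -> meq B A. Proof. by move=> h K. Qed.
Lemma meq_trans A B C : meq A B -> meq B C -> meq A C.
Proof. by move=> h1 h2 K; rewrite h1. Qed.

Lemma mcoef_mc M k i j g : mcoef M k i j g = mc M (k, i, j, g).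
Proof.
rewrite /mcoef /mc big_mkcond; apply: eq_bigr => x _.
by rewrite /keyof !xpair_eqE /= !andbA.
Qed.

Lemma sum_keys (B : MT) (S : seq key) (h : key -> int) :
  uniq S -> {subset [seq keyof y | y <- B] <= S} ->
  \sum_(y <- B) y.1.1.1.1 * h (keyof y) = \sum_(K <- S) mc B K * h K.
Proof.
move=> uS sub.
rewrite /mc; under [RHS]eq_bigr do rewrite mulr_suml.
rewrite exchange_big /= big_seq [RHS]big_seq; apply: eq_bigr => y yB.
have yS : keyof y \in S by apply: sub; apply: map_f.
rewrite (big_rem (keyof y)) //= eqxx big1_seq ?addr0 //.
move=> K /andP [_ KS]; move: KS; rewrite mem_rem_uniq // inE => /andP [nK _].
by rewrite eq_sym (negbTE nK) mul0r.
Qed.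

Lemma mc_lin (B B' : MT) (h : key -> int) : meq B B' ->
  \sum_(y <- B) y.1.1.1.1 * h (keyof y) = \sum_(y <- B') y.1.1.1.1 * h (keyof y).
Proof.
move=> e.
set S := undup [seq keyof y | y <- B ++ B'].
rewrite (@sum_keys B S) ?undup_uniq //; last first.
  by move=> K KB; rewrite mem_undup map_cat mem_cat KB.
rewrite (@sum_keys B' S) ?undup_uniq //; last first.
  by move=> K KB; rewrite mem_undup map_cat mem_cat KB orbT.
by apply: eq_bigr => K _; rewrite e.
Qed.

Definition mono_mul (x y : mono) : mono :=
  (x.1.1.1.1 * y.1.1.1.1, P_mul x.1.1.1.2 y.1.1.1.2, (x.1.1.2 + y.1.1.2)%N, x.1.2, y.2).

Lemma big_Mmul A B (F : mono -> int) :
  \sum_(z <- M_mul A B) F z =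
  \sum_(x <- A) \sum_(y <- B) (if y.1.2 == x.2 then F (mono_mul x y) else 0).
Proof.
rewrite /M_mul big_flatten /= big_map; apply: eq_bigr => x _.
by rewrite big_map big_filter big_mkcond.
Qed.

Lemma meq_mulr A B B' : meq B B' -> meq (M_mul A B) (M_mul A B').
Proof.
move=> e K; rewrite /mc !big_Mmul; apply: eq_bigr => x _.
pose h (K' : key) := if K'.1.1.2 == x.2 then
   (if ((x.1.1.2 + K'.1.1.1)%N, x.1.2, K'.1.2, P_mul x.1.1.1.2 K'.2) == K then x.1.1.1.1 else 0)
   else 0.
transitivity (\sum_(y <- B) y.1.1.1.1 * h (keyof y)).
  apply: eq_bigr => y _; rewrite /h /=.
  by case: ifP => _; [case: ifP => _; rewrite ?mulr0 // mulrC | rewrite mulr0].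
rewrite (mc_lin h e); apply: eq_bigr => y _; rewrite /h /=.
by case: ifP => _; [case: ifP => _; rewrite ?mulr0 // mulrC | rewrite mulr0].
Qed.

Lemma meq_mull A A' B : meq A A' -> meq (M_mul A B) (M_mul A' B).
Proof.
move=> e K; rewrite /mc !big_Mmul exchange_big [RHS]exchange_big /=.
apply: eq_bigr => y _.
pose h (K' : key) := if y.1.2 == K'.1.2 then
   (if ((K'.1.1.1 + y.1.1.2)%N, K'.1.1.2, y.2, P_mul K'.2 y.1.1.1.2) == K then y.1.1.1.1 else 0)
   else 0.
transitivity (\sum_(x <- A) x.1.1.1.1 * h (keyof x)).
  apply: eq_bigr => x _; rewrite /h /=.
  by case: ifP => _; [case: ifP => _; rewrite ?mulr0 // mulrC | rewrite mulr0].
rewrite (mc_lin h e); apply: eq_bigr => x _; rewrite /h /=.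
by case: ifP => _; [case: ifP => _; rewrite ?mulr0 // mulrC | rewrite mulr0].
Qed.

Lemma P_mulA (p q r : P) : P_mul (P_mul p q) r = P_mul p (P_mul q r).
Proof. by rewrite /P_mul /= !fg_mulA. Qed.

Lemma P_1mul (p : P) : P_mul (P_one m n) p = p.
Proof. by case: p => f g; rewrite /P_mul /P_one /= !fg_1mul. Qed.

Lemma mono_mulA x y z : mono_mul (mono_mul x y) z = mono_mul x (mono_mul y z).
Proof. by rewrite /mono_mul /= mulrA addnA P_mulA. Qed.

Lemma meq_mulA A B C : meq (M_mul (M_mul A B) C) (M_mul A (M_mul B C)).
Proof.
move=> K; rewrite /mc [LHS]big_Mmul [LHS]big_Mmul [RHS]big_Mmul.
apply: eq_bigr => x _; rewrite big_Mmul; apply: eq_bigr => y _.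
rewrite /=; case: ifP => e.
  by apply: eq_bigr => z _; rewrite mono_mulA mulrA.
by rewrite big1 // => z _; case: ifP.
Qed.

Lemma meq_mul1 B : meq (M_mul (M_id m n) B) B.
Proof.
move=> K; rewrite /mc big_Mmul !big_cons big_nil addr0 -big_split /=.
apply: eq_bigr => -[[[[c g] k] i] j] _.
by case: i; rewrite /mono_mul /= mul1r add0n P_1mul ?addr0 ?add0r.
Qed.

Lemma mc_sub A B K : mc (M_sub A B) K = mc A K - mc B K.
Proof.
rewrite /mc /M_sub big_cat big_map -sumrN; congr (_ + _).
by apply: eq_bigr => x _; rewrite /keyof /=; case: ifP; rewrite ?oppr0.
Qed.

Lemma meq_sub A A' B B' : meq A A' -> meq B B' -> meq (M_sub A B) (M_sub A' B').
Proof. by move=> e1 e2 K; rewrite !mc_sub e1 e2. Qed.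

Definition mapPh (phi : P -> P) (M : MT) : MT :=
  [seq (x.1.1.1.1, phi x.1.1.1.2, x.1.1.2, x.1.2, x.2) | x <- M].

Lemma meq_mapP phi M M' : meq M M' -> meq (mapPh phi M) (mapPh phi M').
Proof.
move=> e K; rewrite /mc !big_map.
pose h (K' : key) := if (K'.1.1.1, K'.1.1.2, K'.1.2, phi K'.2) == K then 1 else 0 : int.
transitivity (\sum_(y <- M) y.1.1.1.1 * h (keyof y)).
  by apply: eq_bigr => y _; rewrite /h /=; case: ifP; rewrite ?mulr1 ?mulr0.
rewrite (mc_lin h e); apply: eq_bigr => y _; rewrite /h /=.
by case: ifP; rewrite ?mulr1 ?mulr0.
Qed.

Lemma mapP_mul phi A B : (forall p q, phi (P_mul p q) = P_mul (phi p) (phi q)) ->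
  mapPh phi (M_mul A B) = M_mul (mapPh phi A) (mapPh phi B).
Proof.
move=> hom; rewrite /M_mul /mapPh map_flatten -!map_comp.
congr flatten; apply: eq_map => x /=.
rewrite filter_map -!map_comp; apply: eq_map => y /=.
by rewrite hom.
Qed.

Lemma mapP_sub phi A B : mapPh phi (M_sub A B) = M_sub (mapPh phi A) (mapPh phi B).
Proof. by rewrite /mapPh /M_sub map_cat -!map_comp. Qed.

Lemma mapP_comp phi psi M : mapPh phi (mapPh psi M) = mapPh (phi \o psi) M.
Proof. by rewrite /mapPh -map_comp. Qed.

Lemma mapP_id phi M : phi =1 id -> mapPh phi M = M.
Proof.
move=> e; rewrite -[RHS]map_id; apply: eq_map => -[[[[c g] k] i] j].
by rewrite /= e.
Qed.

End Mat.

Section Rho.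
Variables m n : nat.
Local Notation P := (P m n).
Local Notation mono := (mono m n).
Local Notation MT := (MT m n).

Definition rhoF (f : FG m) : MT :=
  [:: (1, (f, fg_one n), 0%N, false, false); (1, (f, fg_one n), 1%N, false, true);
      (-1, (fg_one m, fg_one n), 1%N, false, true); (1, (fg_one m, fg_one n), 0%N, true, true)].

Definition rhoG (g : FG n) : MT :=
  [:: (1, (fg_one m, fg_one n), 0%N, false, false); (1, (fg_one m, g), 1%N, true, false);
      (-1, (fg_one m, fg_one n), 1%N, true, false); (1, (fg_one m, g), 0%N, true, true)].

Lemma ifz (b : bool) (c : int) : (if b then c else 0) = c * b%:R.
Proof. by case: b; rewrite ?mulr1 ?mulr0. Qed.

Lemma rhoF_mul f f' : meq (M_mul (rhoF f) (rhoF f')) (rhoF (fg_mul f f')).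
Proof.
move=> K; rewrite /mc big_Mmul !big_cons !big_nil /= /keyof /mono_mul /P_mul /=.
rewrite ?fg_mul1 ?fg_1mul.
rewrite !ifz. ring.
Qed.

Lemma rhoG_mul g g' : meq (M_mul (rhoG g) (rhoG g')) (rhoG (fg_mul g g')).
Proof.
move=> K; rewrite /mc big_Mmul !big_cons !big_nil /= /keyof /mono_mul /P_mul /=.
rewrite ?fg_mul1 ?fg_1mul.
rewrite !ifz. ring.
Qed.

Lemma rhoF_one : meq (rhoF (fg_one m)) (M_id m n).
Proof. move=> K; rewrite /mc !big_cons !big_nil /= /keyof /= !ifz. ring. Qed.

Lemma rhoG_one : meq (rhoG (fg_one n)) (M_id m n).
Proof. move=> K; rewrite /mc !big_cons !big_nil /= /keyof /= !ifz. ring. Qed.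

End Rho.

Lemma fgw_normFG N w : fgw (normFG N w) = normW N w.
Proof. by []. Qed.

Lemma fgw_normFG1 N a : (a.1 < N)%N -> fgw (normFG N [:: a]) = [:: a].
Proof. by move=> h; rewrite fgw_normFG /normW /= h. Qed.

Lemma normFG_cons N a u : all (fun a => a.1 < N)%N (a :: u) ->
  normFG N (a :: u) = fg_mul (normFG N [:: a]) (normFG N u).
Proof.
move=> /= /andP [an un]; apply: val_inj.
change (fgw (normFG N (a :: u)) = fgw (fg_mul (normFG N [:: a]) (normFG N u))).
rewrite fgw_mul fgw_normFG1 // !fgw_normFG !normW_act //=.
by rewrite an.
Qed.

Definition shiftl (m : nat) (a : letter) : letter := (m + a.1, a.2)%N.

Section RW.
Variables m n : nat.
Local Notation P := (P m n).
Local Notation mono := (mono m n).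
Local Notation MT := (MT m n).
Local Notation rl := (rho_letter m n).

Definition RW (w : seq letter) : MT := foldr (fun a M => M_mul (rl a) M) (M_id m n) w.

Lemma rho_RW x : rho x = RW (fgw x). Proof. by []. Qed.

Lemma rl_F a : (a.1 < m)%N -> rl a = rhoF n (normFG m [:: a]).
Proof. by move=> h; rewrite /rho_letter h. Qed.

Lemma rl_G a : (m <= a.1)%N -> rl a = rhoG m (normFG n [:: (a.1 - m, a.2)%N]).
Proof. by move=> h; rewrite /rho_letter ltnNge h. Qed.

Lemma RW_F u : all (fun a => a.1 < m)%N u -> meq (RW u) (rhoF n (normFG m u)).
Proof.
elim: u => [|a u IH] /=; first by move=> _; apply: meq_sym; apply: rhoF_one.
move=> /andP [am um].
apply: meq_trans (meq_mulr _ (IH um)) _.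
rewrite rl_F // [normFG m (a :: u)]normFG_cons /= ?am //.
exact: rhoF_mul.
Qed.

Lemma RW_G u : all (fun a => a.1 < n)%N u -> meq (RW (map (shiftl m) u)) (rhoG m (normFG n u)).
Proof.
elim: u => [|a u IH] /=; first by move=> _; apply: meq_sym; apply: rhoG_one.
move=> /andP [an un].
apply: meq_trans (meq_mulr _ (IH un)) _.
rewrite rl_G /shiftl /= ?leq_addr // addKn [normFG n (a :: u)]normFG_cons /= ?an //.
case: a an => i x an /=.
exact: rhoG_mul.
Qed.

Lemma RW_cancel a b : cancels a b -> (a.1 < m + n)%N -> meq (M_mul (rl a) (rl b)) (M_id m n).
Proof.
move=> /cancels_eq -> an.
case: (ltnP a.1 m) => h.
  rewrite !rl_F //; apply: meq_trans; first exact: rhoF_mul.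
  have -> : fg_mul (normFG m [:: a]) (normFG m [:: linv a]) = fg_one m.
    apply: val_inj.
    change (fgw (fg_mul (normFG m [:: a]) (normFG m [:: linv a])) = [::]).
    by rewrite fgw_mul !fgw_normFG1 //= cancels_inv.
  exact: rhoF_one.
rewrite !rl_G //; apply: meq_trans; first exact: rhoG_mul.
have an' : (a.1 - m < n)%N by rewrite ltn_subLR.
have -> : fg_mul (normFG n [:: (a.1 - m, a.2)%N]) (normFG n [:: ((linv a).1 - m, (linv a).2)%N]) = fg_one n.
  apply: val_inj.
  change (fgw (fg_mul (normFG n [:: (a.1 - m, a.2)%N]) (normFG n [:: ((linv a).1 - m, (linv a).2)%N])) = [::]).
  rewrite fgw_mul !fgw_normFG1 //= /cancels /= eqxx /=.
  by case: a.2.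
exact: rhoG_one.
Qed.

Lemma RW_push a v : (a.1 < m + n)%N -> reduced (m + n) v -> meq (RW (push a v)) (RW (a :: v)).
Proof.
move=> an rv; case: v rv => [|b t] //= rv.
case: ifP => ab //=.
apply: meq_sym.
apply: meq_trans (meq_sym (meq_mulA _ _ _)) _.
apply: meq_trans (meq_mull _ (RW_cancel ab an)) _.
exact: meq_mul1.
Qed.

Lemma RW_act u v : all (fun a => a.1 < m + n)%N u -> reduced (m + n) v ->
  meq (RW (act u v)) (RW (u ++ v)).
Proof.
elim: u => [|a u IH] /= ; first by move=> _ _; apply: meq_refl.
move=> /andP [an un] rv.
apply: meq_trans (RW_push an (act_reduced un rv)) _ => /=.
exact: meq_mulr (IH un rv).
Qed.

Lemma RW_norm u : all (fun a => a.1 < m + n)%N u -> meq (RW (normW (m + n) u)) (RW u).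
Proof.
move=> un; rewrite normW_act //.
by have := RW_act un (isT : reduced (m + n) [::]); rewrite cats0.
Qed.

Lemma RW_cat u v : meq (RW (u ++ v)) (M_mul (RW u) (RW v)).
Proof.
elim: u => [|a u IH] /=; first by apply: meq_sym; apply: meq_mul1.
apply: meq_trans (meq_mulr _ IH) _.
exact: meq_sym (meq_mulA _ _ _).
Qed.

Section Gen.
Variable img : nat -> seq letter.
Hypothesis Himg : forall j, (j < m + n)%N -> all (fun a => a.1 < m + n)%N (img j).
Variable phi : P -> P.
Hypothesis phi_mul : forall p q, phi (P_mul p q) = P_mul (phi p) (phi q).
Hypothesis phi_one : phi (P_one m n) = P_one m n.
Hypothesis base : forall a, (a.1 < m + n)%N -> meq (RW (img' img a)) (mapPh phi (rl a)).

Lemma RW_substW w : all (fun a => a.1 < m + n)%N w ->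
  meq (RW (substW img w)) (mapPh phi (RW w)).
Proof.
elim: w => [|a w IH] /=.
  by move=> _; rewrite /mapPh /= phi_one; apply: meq_refl.
move=> /andP [an wn].
rewrite substW_cons.
apply: meq_trans (RW_cat _ _) _.
apply: meq_trans (meq_mulr _ (IH wn)) _.
apply: meq_trans (meq_mull _ (base an)) _.
rewrite mapP_mul //; exact: meq_refl.
Qed.

Lemma rho_genF x : meq (rho (genF img x)) (mapPh phi (rho x)).
Proof.
rewrite !rho_RW fgw_normFG.
have wn : all (fun a => a.1 < m + n)%N (fgw x) by apply: reduced_all; apply: fgP.
apply: meq_trans (RW_norm _) _; first exact: all_substW.
exact: RW_substW.
Qed.

End Gen.
End RW.

Lemma gen_letter N s b : (s.1.+1 < N)%N -> (b.1 < N)%N ->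
  artin_gen N s (normFG N [:: b]) = normFG N (img' (sigma_img s) b).
Proof.
move=> sN bN.
have Himg : forall j, (j < N)%N -> all (fun a => a.1 < N)%N (sigma_img s j).
  by move=> j; apply: sigma_img_all.
apply: val_inj.
change (fgw (genF (n:=N) (sigma_img s) (normFG N [:: b])) = fgw (normFG N (img' (sigma_img s) b))).
rewrite fgw_genF // fgw_normFG1 // substW_cons cats0 fgw_normFG normW_act //.
exact: all_img'.
Qed.

Lemma sigma_img_other s j : j != s.1 -> j != s.1.+1 -> sigma_img s j = [:: (j, false)].
Proof. by move=> h1 h2; rewrite /sigma_img (negbTE h1) (negbTE h2); case: s.2. Qed.

Lemma img'_other s a : a.1 != s.1 -> a.1 != s.1.+1 -> img' (sigma_img s) a = [:: a].
Proof.
move=> h1 h2; rewrite /img' sigma_img_other //.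
by case: a {h1 h2} => i [].
Qed.

Lemma invW_shift m u : invW (map (shiftl m) u) = map (shiftl m) (invW u).
Proof. by rewrite /invW map_rev -!map_comp. Qed.

Lemma sigma_shift m s j :
  sigma_img ((m + s.1)%N, s.2) (m + j)%N = map (shiftl m) (sigma_img s j).
Proof.
rewrite /sigma_img /= eqn_add2l -addnS eqn_add2l.
by case: s.2 => /=; repeat case: ifP => _ /=.
Qed.

Lemma img'_shift m s b :
  img' (sigma_img ((m + s.1)%N, s.2)) (shiftl m b) = map (shiftl m) (img' (sigma_img s) b).
Proof. by rewrite /img' /shiftl /= sigma_shift; case: b.2; rewrite ?invW_shift. Qed.

Section Gens.
Variables m n : nat.
Local Notation P := (P m n).
Local Notation rl := (rho_letter m n).

Lemma genA s : (s.1.+1 < m)%N -> forall x,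
  meq (rho (artin_gen (m + n) s x)) (mapPh (fun p : P => (artin_gen m s p.1, p.2)) (rho x)).
Proof.
move=> sm x.
have smn : (s.1.+1 < m + n)%N by apply: leq_trans sm (leq_addr _ _).
have Himg : forall j, (j < m)%N -> all (fun a => a.1 < m)%N (sigma_img s j).
  by move=> j; apply: sigma_img_all.
apply: (rho_genF (img := sigma_img s)).
- by move=> j; apply: sigma_img_all.
- by move=> p q; rewrite /P_mul /= !artin_gen_genF genF_mul.
- by [].
move=> a an.
case: (ltnP a.1 m) => h.
  rewrite rl_F //.
  have -> : mapPh (fun p : P => (artin_gen m s p.1, p.2)) (rhoF n (normFG m [:: a]))
     = rhoF n (artin_gen m s (normFG m [:: a])) by [].
  rewrite gen_letter //.
  by apply: RW_F; apply: all_img'.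
have h1 : a.1 != s.1 by rewrite neq_ltn (leq_trans (ltnW sm) h) orbT.
have h2 : a.1 != s.1.+1 by rewrite neq_ltn (leq_trans sm h) orbT.
rewrite img'_other // rl_G //.
have -> : mapPh (fun p : P => (artin_gen m s p.1, p.2)) (rhoG m (normFG n [:: (a.1 - m, a.2)%N]))
     = rhoG m (normFG n [:: (a.1 - m, a.2)%N]) by [].
have := @RW_G m n [:: (a.1 - m, a.2)%N].
rewrite /= /shiftl /= subnKC // -surjective_pairing; apply.
by rewrite andbT ltn_subLR.
Qed.

Lemma genB s : (s.1.+1 < n)%N -> forall x,
  meq (rho (artin_gen (m + n) ((m + s.1)%N, s.2) x))
      (mapPh (fun p : P => (p.1, artin_gen n s p.2)) (rho x)).
Proof.
move=> sn x.
have Himg : forall j, (j < n)%N -> all (fun a => a.1 < n)%N (sigma_img s j).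
  by move=> j; apply: sigma_img_all.
apply: (rho_genF (img := sigma_img ((m + s.1)%N, s.2))).
- by move=> j; apply: sigma_img_all; rewrite /= -addnS ltn_add2l.
- by move=> p q; rewrite /P_mul /= !artin_gen_genF genF_mul.
- by [].
move=> a an.
case: (ltnP a.1 m) => h.
  have h1 : a.1 != (m + s.1)%N by rewrite neq_ltn (leq_trans h) ?leq_addr.
  have h2 : a.1 != (m + s.1).+1%N by rewrite neq_ltn (leq_trans h) // ltnW // ltnS leq_addr.
  rewrite img'_other // rl_F //.
  have -> : mapPh (fun p : P => (p.1, artin_gen n s p.2)) (rhoF n (normFG m [:: a]))
     = rhoF n (normFG m [:: a]) by [].
  by apply: RW_F; rewrite /= h.
have -> : a = shiftl m (a.1 - m, a.2)%N by rewrite /shiftl /= subnKC //; case: a {an h}.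
set b := (a.1 - m, a.2)%N.
have bn : (b.1 < n)%N by rewrite /= ltn_subLR.
rewrite img'_shift rl_G /shiftl /= ?leq_addr // addKn -/b.
change (meq (RW m n (map (shiftl m) (img' (sigma_img s) b))) (rhoG m (artin_gen n s (normFG n [:: b])))).
rewrite gen_letter //.
by apply: RW_G; apply: all_img'.
Qed.

Lemma artin_cat N a b x : artin N (a ++ b) x = artin N a (artin N b x).
Proof. by elim: a => [|s a IH] //=; rewrite IH. Qed.

Lemma mlA alpha : braid_word m alpha -> forall x,
  meq (rho (artin (m + n) alpha x)) (mapPh (fun p : P => (artin m alpha p.1, p.2)) (rho x)).
Proof.
elim: alpha => [|s a IH] /=.
  by move=> _ x; rewrite mapP_id; [apply: meq_refl | case].
rewrite /braid_word /= => /andP [hs ha] x.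
apply: meq_trans (genA hs _) _.
apply: meq_trans (meq_mapP _ (IH ha x)) _.
rewrite mapP_comp; apply: meq_refl.
Qed.

Lemma mlB beta : braid_word n beta -> forall x,
  meq (rho (artin (m + n) (map (fun s => ((m + s.1)%N, s.2)) beta) x))
      (mapPh (fun p : P => (p.1, artin n beta p.2)) (rho x)).
Proof.
elim: beta => [|s a IH] /=.
  by move=> _ x; rewrite mapP_id; [apply: meq_refl | case].
rewrite /braid_word /= => /andP [hs ha] x.
apply: meq_trans (genB hs _) _.
apply: meq_trans (meq_mapP _ (IH ha x)) _.
rewrite mapP_comp; apply: meq_refl.
Qed.

Lemma ml alpha beta : braid_word m alpha -> braid_word n beta -> forall x,
  meq (rho (artin (m + n) (braid_tensor m alpha beta) x))
      (mapPh (fun p : P => (artin m alpha p.1, artin n beta p.2)) (rho x)).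
Proof.
move=> ha hb x; rewrite /braid_tensor artin_cat.
apply: meq_trans (mlA ha _) _.
apply: meq_trans (meq_mapP _ (mlB hb x)) _.
rewrite mapP_comp; apply: meq_refl.
Qed.

End Gens.

Lemma pres_inj (T : eqType) (mul : T -> T -> T) lt (phi : T -> T) :
  bi_ordering mul lt -> preserves phi lt -> injective phi.
Proof.
move=> [irr _ tot _] pres x y e.
have [//|ne] := eqVneq x y.
have nxy : x <> y by move=> exy; rewrite exy eqxx in ne.
case: (tot x y nxy) => /pres; rewrite e => /irr [].
Qed.

Section Transfer.
Variables m n : nat.
Variables (ltF : FG m -> FG m -> Prop) (ltG : FG n -> FG n -> Prop).
Local Notation P := (P m n).

Lemma R_transfer (r r' : P -> int) (Phi : P -> P) :
  (forall h, r' (Phi h) = r h) -> (forall g, (forall h, Phi h <> g) -> r' g = 0) ->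
  (forall p q, lexlt ltF ltG p q <-> lexlt ltF ltG (Phi p) (Phi q)) ->
  (R_zero r <-> R_zero r') /\ (R_pos ltF ltG r <-> R_pos ltF ltG r').
Proof.
move=> e1 e2 lx; split; split.
- move=> z g; case: (classic (exists h, Phi h = g)) => [[h <-]|nh].
    by rewrite e1 z.
  by apply: e2 => h eh; apply: nh; exists h.
- by move=> z h; rewrite -e1 z.
- move=> [g [pg hg]]; exists (Phi g); rewrite e1; split => // h' lt'.
  case: (classic (exists h, Phi h = h')) => [[h eh]|nh].
    by rewrite -eh e1; apply: hg; apply: (proj2 (lx _ _)); rewrite eh.
  by apply: e2 => h eh; apply: nh; exists h.
- move=> [g' [pg hg]].
  case: (classic (exists h, Phi h = g')) => [[g eg]|nh]; last first.
    by move: pg; rewrite (e2 g') ?ltxx // => h0 eh; apply: nh; exists h0.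
  exists g; rewrite -e1 eg; split => // h lt.
  by rewrite -e1; apply: hg; rewrite -eg; apply: (proj1 (lx _ _)).
Qed.

Lemma M_pos_imp ofs (D D' : MT m n) :
  (forall k i j, R_zero (mcoef D k i j) -> R_zero (mcoef D' k i j)) ->
  (forall k i j, R_pos ltF ltG (mcoef D k i j) -> R_pos ltF ltG (mcoef D' k i j)) ->
  M_pos ltF ltG ofs D -> M_pos ltF ltG ofs D'.
Proof.
move=> hz hp [k [hlt hE]]; exists k; split.
  by move=> k' lk i j; apply: hz; apply: hlt.
move: hE => /= [a|[a b]|[a b c]|[a b c d]].
- by apply: Or41; apply: hp.
- by apply: Or42; split; [apply: hz | apply: hp].
- by apply: Or43; split; [apply: hz | apply: hz | apply: hp].
- by apply: Or44; split; [apply: hz | apply: hz | apply: hz | apply: hp].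
Qed.

Lemma M_pos_iff ofs (D D' : MT m n) :
  (forall k i j, (R_zero (mcoef D k i j) <-> R_zero (mcoef D' k i j)) /\
     (R_pos ltF ltG (mcoef D k i j) <-> R_pos ltF ltG (mcoef D' k i j))) ->
  (M_pos ltF ltG ofs D <-> M_pos ltF ltG ofs D').
Proof.
move=> h; split; apply: M_pos_imp => k i j; by case: (h k i j) => [[? ?] [? ?]].
Qed.

Lemma M_pos_meq ofs (D D' : MT m n) : meq D D' ->
  (M_pos ltF ltG ofs D <-> M_pos ltF ltG ofs D').
Proof.
move=> e; apply: M_pos_iff => k i j.
apply: (R_transfer (Phi := id)) => //.
- by move=> h; rewrite !mcoef_mc e.
- by move=> g hg; case: (hg g).
Qed.

Lemma M_pos_mapP ofs (D : MT m n) (Phi : P -> P) : injective Phi ->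
  (forall p q, lexlt ltF ltG p q <-> lexlt ltF ltG (Phi p) (Phi q)) ->
  (M_pos ltF ltG ofs D <-> M_pos ltF ltG ofs (mapPh Phi D)).
Proof.
move=> inj lx; apply: M_pos_iff => k i j.
apply: R_transfer => //.
- move=> h; rewrite !mcoef_mc /mc big_map; apply: eq_bigr => x _.
  by rewrite /keyof /= [in LHS]xpair_eqE [in RHS]xpair_eqE /= (inj_eq inj).
- move=> g hg; rewrite mcoef_mc /mc big_map big1 // => x _.
  case: ifP => // /eqP /(congr1 snd) /= e.
  by case: (hg x.1.1.1.2).
Qed.

End Transfer.

Theorem proposition6p2 (m n : nat)
    (ltF : FG m -> FG m -> Prop) (ltG : FG n -> FG n -> Prop)
    (alpha beta : seq (nat * bool)) (ofs : bool) :
  braid_word m alpha -> braid_word n beta ->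
  bi_ordering (@fg_mul m) ltF -> bi_ordering (@fg_mul n) ltG ->
  preserves (artin m alpha) ltF -> preserves (artin n beta) ltG ->
  preserves (artin (m + n) (braid_tensor m alpha beta)) (prec ltF ltG ofs).
Proof.
move=> ha hb oF oG pF pG x y.
set Phi := fun p : P m n => (artin m alpha p.1, artin n beta p.2).
have injF := pres_inj oF pF.
have injG := pres_inj oG pG.
have inj : injective Phi.
  move=> [p1 p2] [q1 q2] /= [] /injF -> /injG -> //.
have lx : forall p q, lexlt ltF ltG p q <-> lexlt ltF ltG (Phi p) (Phi q).
  move=> [p1 p2] [q1 q2]; rewrite /lexlt /=.
  split => -[h|[e h]].
  - by left; apply: (proj1 (pF _ _)).
  - by right; split; [rewrite e | apply: (proj1 (pG _ _))].
  - by left; apply: (proj2 (pF _ _)).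
  - by right; split; [apply: injF | apply: (proj2 (pG _ _))].
rewrite /prec (M_pos_mapP ofs _ inj lx) mapP_sub.
apply: M_pos_meq; apply: meq_sub; apply: meq_sym; exact: ml.
Qed.
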